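(* Let $K\ge 2$, $\mathcal{X}\subseteq\mathbb{R}^d$, let $(X,Y)$ be a random pair on $\mathcal{X}\times\mathbb{R}$ with $X$-marginal $P_X$, let $f_k(\cdot;\theta_k):\mathcal{X}\to\mathbb{R}$ ($k=1,\dots,K$, $\theta=(\theta_1,\dots,\theta_K)$) be expert maps and $a(\cdot;\phi)=(a_1(\cdot;\phi),\dots,a_K(\cdot;\phi))$ router logits. Assume: (i) (uniform margin tail) there exist $C_{\mathrm{mt}}>0$ and $\alpha>0$ such that for all admissible router parameters $\phi$ and all $t>0$, $\mathbb{P}(\Delta(X;\phi)\le t)\le C_{\mathrm{mt}}t^\alpha$; (ii) (uniform boundedness) there exist $B_Y,B_f>0$ with $|Y|\le B_Y$ almost surely and $|f_k(x;\theta_k)|\le B_f$ for all $k$, all $x\in\mathcal{X}$ and all admissible $\theta_k$. Then (the hard argmax being unique $P_X$-a.s.) there is a constant $C_{\mathrm{sh}}>0$ depending only on $K,C_{\mathrm{mt}},\alpha,B_Y,B_f$ such that for all $\tau\in(0,1]$ and all admissible $(\theta,\phi)$, \[|L_\tau(\theta,\phi)-L_0(\theta,\phi)|\le C_{\mathrm{sh}}\tau^\alpha.\] In particular $L_\tau\to L_0$ uniformly on compact parameter sets with rate $O(\tau^\alpha)$.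
   Context: For $\tau>0$ the softmax router weights are $p_k^{(\tau)}(x;\phi)=\exp(a_k(x;\phi)/\tau)/\sum_{j=1}^K\exp(a_j(x;\phi)/\tau)$, the soft predictor is $h_{\theta,\phi,\tau}(x)=\sum_k p_k^{(\tau)}(x;\phi)f_k(x;\theta_k)$, and the soft risk is $L_\tau(\theta,\phi)=\mathbb{E}[(Y-h_{\theta,\phi,\tau}(X))^2]$. With ordered logits $a_{(1)}(x;\phi)\ge a_{(2)}(x;\phi)\ge\cdots$, the top-two margin is $\Delta(x;\phi)=a_{(1)}(x;\phi)-a_{(2)}(x;\phi)$. The hard winner is $k^\star(x;\phi)=\min\arg\max_k a_k(x;\phi)$, the hard predictor is $h_{\theta,\phi,0}(x)=f_{k^\star(x;\phi)}(x;\theta_{k^\star(x;\phi)})$, and the hard risk is $L_0(\theta,\phi)=\mathbb{E}[(Y-h_{\theta,\phi,0}(X))^2]$. *)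

(* Defs.v *)
From HB Require Import structures.
From mathcomp Require Import all_boot all_order all_algebra.
From mathcomp Require Import all_classical all_reals all_analysis.
Set Implicit Arguments. Unset Strict Implicit. Unset Printing Implicit Defensive.
Import Order.TTheory GRing.Theory Num.Theory.
Local Open Scope ring_scope.

Section MoE.
Variable R : realType.
Variable K : nat.

(* hard winner k*(x;phi) = min argmax_k a_k (smallest index among maximizers);
   None can only happen when K = 0. *)
Definition is_argmax (a : 'I_K -> R) (k : 'I_K) : bool := [forall j, a j <= a k].

Definition hard_winner (a : 'I_K -> R) : option 'I_K :=
  [pick k | is_argmax a k && [forall j, is_argmax a j ==> (k <= j)%N]].

(* ordered logits: a_(1) = max_k a_k, a_(2) = largest logit among the indices
   other than the hard winner (the second order statistic). The seed
   \min_k a_k is a lower bound of all logits, so it does not affect the max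
   as soon as K >= 2. *)
Definition logit_min (a : 'I_K -> R) (k0 : 'I_K) : R := \big[Num.min/a k0]_k a k.

Definition top_margin (a : 'I_K -> R) : R :=
  match hard_winner a with
  | Some ks => a ks - \big[Num.max/logit_min a ks]_(k | k != ks) a k
  | None => 0
  end.

Definition softmax (tau : R) (a : 'I_K -> R) (k : 'I_K) : R :=
  expR (a k / tau) / \sum_j expR (a j / tau).

End MoE.

Section Predictors.
Variable R : realType.
Variable K : nat.
Variables (Xs Theta Phi : Type).
Variable f : 'I_K -> Theta -> Xs -> R.
Variable a : 'I_K -> Phi -> Xs -> R.

Definition soft_pred (tau : R) (theta : 'I_K -> Theta) (phi : Phi) (x : Xs) : R :=
  \sum_k softmax tau (fun j => a j phi x) k * f k (theta k) x.

Definition hard_pred (theta : 'I_K -> Theta) (phi : Phi) (x : Xs) : R :=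
  match hard_winner (fun j => a j phi x) with
  | Some ks => f ks (theta ks) x
  | None => 0
  end.

Definition margin (phi : Phi) (x : Xs) : R := top_margin (fun j => a j phi x).
End Predictors.

Local Open Scope ereal_scope.
Definition sq_risk {R : realType} {d} {T : measurableType d}
  (P : probability T R) {Xs : Type} (X : T -> Xs) (Y : T -> R) (h : Xs -> R) : \bar R :=
  \int[P]_w (((Y w - h (X w)) ^+ 2)%R)%:E.

(* Main.v *)
Require Import Defs.
From HB Require Import structures.
From mathcomp Require Import all_boot all_order all_algebra.
From mathcomp Require Import all_classical all_reals all_analysis.
From mathcomp Require Import lra ring measurable_realfun.
Import Order.TTheory GRing.Theory Num.Theory.
Local Open Scope ring_scope.

Section Pure.
Variable R : realType.
Variable K : nat.
Implicit Types b : 'I_K -> R.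

Definition hwP b k := is_argmax b k && [forall j, is_argmax b j ==> (k <= j)%N].

Lemma hw_spec b k : (hard_winner b == Some k) = hwP b k.
Proof.
rewrite /hard_winner; case: pickP => [k' Hk'|H]; last by rewrite /hwP H.
have [<-|neq] := eqVneq k' k; first by rewrite eqxx /hwP Hk'.
have -> : (Some k' == Some k) = false by apply/negbTE; apply: contra neq => /eqP [->].
rewrite /hwP.
apply/esym/negbTE/negP => Hk.
move: Hk Hk' => /andP[a1 /forallP f1] /andP[a2 /forallP f2].
have l1 := implyP (f1 k') a2; have l2 := implyP (f2 k) a1.
by move/eqP: neq; apply; apply/val_inj/eqP; rewrite eqn_leq l1 l2.
Qed.

Lemma hw_some b ks : hard_winner b = Some ks -> is_argmax b ks.
Proof. by move=> H; have := hw_spec b ks; rewrite H eqxx => /esym/andP[]. Qed.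

Lemma margin_props b ks : hard_winner b = Some ks ->
  0 <= top_margin b /\ forall k, k != ks -> b k <= b ks - top_margin b.
Proof.
move=> H; have /forallP am := hw_some b ks H.
rewrite /top_margin H.
set M := \big[Num.max/_]_(k | k != ks) b k.
have HM : M <= b ks.
  apply: bigmax_le => //; first exact: bigmin_le_id.
split; first by rewrite subr_ge0.
move=> k nk; rewrite opprB addrCA subrr addr0.
exact: le_bigmax_cond.
Qed.

Lemma margin_none b : hard_winner b = None -> top_margin b = 0.
Proof. by rewrite /top_margin => ->. Qed.

Lemma softmax_ge0 tau b k : 0 <= softmax tau b k.
Proof. by rewrite /softmax divr_ge0 // ?expR_ge0 // sumr_ge0 // => *; exact: expR_ge0. Qed.

Lemma softmax_le1 tau b k : softmax tau b k <= 1.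
Proof.
rewrite /softmax; have S := expR_gt0 (b k / tau).
have HS : expR (b k / tau) <= \sum_j expR (b j / tau).
  rewrite (bigD1 k) //= lerDl sumr_ge0 // => *; exact: expR_ge0.
by rewrite ler_pdivrMr ?mul1r // (lt_le_trans S HS).
Qed.

Lemma softmax_sum1 tau b (k0 : 'I_K) : \sum_k softmax tau b k = 1 :> R.
Proof.
rewrite /softmax -mulr_suml divff // gt_eqF //.
rewrite (bigD1 k0) //= ltr_pwDl ?expR_gt0 // sumr_ge0 // => *; exact: expR_ge0.
Qed.

Lemma softmax_le_ratio tau b k ks : softmax tau b k <= expR ((b k - b ks) / tau).
Proof.
rewrite /softmax mulrBl expRB.
apply: ler_wpM2l; first exact: expR_ge0.
rewrite lef_pV2 ?posrE ?expR_gt0 //.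
  rewrite (bigD1 ks) //= lerDl sumr_ge0 // => *; exact: expR_ge0.
rewrite (bigD1 ks) //= ltr_pwDl ?expR_gt0 // sumr_ge0 // => *; exact: expR_ge0.
Qed.

Lemma soft_hard_diff tau (Bf : R) b (fv : 'I_K -> R) : 0 < tau ->
  (forall k, `|fv k| <= Bf) ->
  `|\sum_k softmax tau b k * fv k -
    (match hard_winner b with Some ks => fv ks | None => 0 end)|
  <= K%:R * (2 * Bf) * expR (- top_margin b / tau).
Proof.
move=> tau0 hf.
case E: (hard_winner b) => [ks|].
  have Bf0 : 0 <= Bf by exact: le_trans (normr_ge0 _) (hf ks).
- have [m0 mk] := margin_props b ks E.
  have -> : fv ks = \sum_k softmax tau b k * fv ks.
    by rewrite -mulr_suml (softmax_sum1 tau b ks) mul1r.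
  rewrite -sumrB.
  apply: le_trans (ler_norm_sum _ _ _) _.
  rewrite (_ : K%:R * _ * _ = \sum_(k : 'I_K) (2 * Bf * expR (- top_margin b / tau))); last first.
    by rewrite sumr_const cardE size_enum_ord -[RHS]mulr_natl [RHS]mulrA.
  apply: ler_sum => k _; rewrite -mulrBr normrM.
  have [->|nk] := eqVneq k ks; first by rewrite subrr normr0 mulr0 mulr_ge0 ?expR_ge0 // mulr_ge0.
  rewrite mulrC; apply: ler_pM.
  + exact: normr_ge0.
  + exact: normr_ge0.
  + by apply: le_trans (ler_normB _ _) _; rewrite mulr2n mulrDl mul1r lerD.
  + rewrite ger0_norm ?softmax_ge0 //.
    apply: le_trans (softmax_le_ratio _ _ _ ks) _.
    rewrite ler_expR ler_pM2r ?invr_gt0 //.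
    by have := mk k nk; lra.
- rewrite (margin_none b E) subr0 oppr0 mul0r expR0 mulr1.
  apply: le_trans (ler_norm_sum _ _ _) _.
  rewrite (_ : K%:R * _ = \sum_(k : 'I_K) (2 * Bf)); last first.
    by rewrite sumr_const cardE size_enum_ord -[RHS]mulr_natl.
  apply: ler_sum => k _; rewrite normrM ger0_norm ?softmax_ge0 //.
  apply: ler_pM => //; first exact: softmax_ge0.
  - apply: le_trans (softmax_le1 tau b k) _; lra.
Qed.
End Pure.


Section Shell.
Variable R : realType.

Lemma shell_aux (tau w D : R) N : 0 < tau -> 0 < w -> 0 <= D ->
  expR (- D / tau) <= \sum_(n < N.+1) expR (- (n%:R * w)) * (D <= n.+1%:R * w * tau)%R%:R
     + (if N.+1%:R * w * tau < D then expR (- D / tau) else 0).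
Proof.
move=> t0 w0 D0; elim: N => [|N IH].
  rewrite big_ord1 /= mul0r oppr0 expR0 mul1r.
  case: ifPn => h; first by rewrite (leNgt D) h add0r.
  rewrite -leNgt in h; rewrite h addr0.
  by rewrite -expR0 ler_expR mulNr oppr_le0 divr_ge0 // ltW.
rewrite big_ord_recr /=.
case: ifPn IH => h1 IH; last first.
  rewrite -leNgt in h1.
  have h2 : D <= N.+2%:R * w * tau.
    apply: le_trans h1 _; rewrite ler_pM2r // ler_pM2r // ler_nat //.
  rewrite h2 mulr1 ltNge h2 /= addr0 addr0 in IH *.
  by apply: le_trans IH _; rewrite lerDl expR_ge0.
case: ifPn => h2.
  rewrite (leNgt D) h2 /= mulr0 addr0.
  exact: IH.
rewrite -leNgt in h2; rewrite h2 mulr1 addr0.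
have hE : expR (- D / tau) <= expR (- (N.+1%:R * w)).
  rewrite ler_expR mulNr lerN2 ler_pdivlMr //; exact: ltW.
apply: le_trans hE _; rewrite lerDr sumr_ge0 // => i _.
Qed.

Lemma shell_bound (tau w D : R) N : 0 < tau -> 0 < w -> 0 <= D ->
  expR (- D / tau) <= \sum_(n < N.+1) expR (- (n%:R * w)) * (D <= n.+1%:R * w * tau)%R%:R
     + expR (- (N.+1%:R * w)).
Proof.
move=> t0 w0 D0; apply: le_trans (@shell_aux tau w D N t0 w0 D0) _.
rewrite lerD2l; case: ifPn => h; last exact: expR_ge0.
rewrite ler_expR mulNr lerN2 ler_pdivlMr //; exact: ltW.
Qed.
End Shell.


Section Sums.
Variable R : realType.

Lemma geo_bound (q : R) M : 0 <= q -> q <= 2^-1 ->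
  \sum_(n < M) q ^+ n <= 2 - 2 * q ^+ M.
Proof.
move=> q0 q1; elim: M => [|M IH]; first by rewrite big_ord0 expr0; lra.
rewrite big_ord_recr /= exprS.
have h : 0 <= q ^+ M by exact: exprn_ge0.
have h2 : q * q ^+ M <= 2^-1 * q ^+ M by exact: ler_wpM2r.
lra.
Qed.

Lemma expRN1_le : expR (-1) <= 2^-1 :> R.
Proof.
rewrite expRN lef_pV2 ?posrE ?expR_gt0 //.
by have := expR_ge1Dx (1 : R); lra.
Qed.

Lemma term_bound (alpha tau : R) (n : nat) : 0 < alpha -> 0 < tau ->
  expR (- (n%:R * (alpha + 1))) * (n.+1%:R * (alpha + 1) * tau) `^ alpha
  <= (alpha + 1) `^ alpha * tau `^ alpha * expR (-1) ^+ n.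
Proof.
move=> a0 t0.
have w0 : 0 <= alpha + 1 by lra.
have n0 : 0 <= n.+1%:R :> R by [].
rewrite (powRM alpha (mulr_ge0 n0 w0) (ltW t0)) (powRM alpha n0 w0).
have hn : n.+1%:R `^ alpha <= expR (n%:R * alpha).
  rewrite expRM; apply: ge0_ler_powR; rewrite ?nnegrE ?expR_ge0 //; first exact: ltW.
  by rewrite -addn1 natrD addrC; apply: expR_ge1Dx.
rewrite -expRM_natl.
have key : expR (- (n%:R * (alpha + 1))) * n.+1%:R `^ alpha <= expR (n%:R * -1).
  apply: le_trans (ler_wpM2l (expR_ge0 _) hn) _.
  rewrite (_ : n%:R * -1 = - (n%:R * (alpha + 1)) + n%:R * alpha); first by rewrite expRD.
  lra.
set e1 := expR _ in key *; set m := _ `^ alpha in key *.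
set A := (alpha + 1) `^ alpha; set B := tau `^ alpha.
have -> : e1 * (m * A * B) = (e1 * m) * (A * B) by ring.
rewrite [X in _ <= X]mulrC; apply: ler_wpM2r => //.
by rewrite mulr_ge0 ?powR_ge0.
Qed.

Lemma sum_bound (Cmt alpha tau : R) N : 0 < alpha -> 0 < tau -> 0 <= Cmt ->
  \sum_(n < N) expR (- (n%:R * (alpha + 1))) * (Cmt * (n.+1%:R * (alpha + 1) * tau) `^ alpha)
  <= 2 * Cmt * (alpha + 1) `^ alpha * tau `^ alpha.
Proof.
move=> a0 t0 c0.
apply: le_trans (_ : \sum_(n < N) Cmt * ((alpha + 1) `^ alpha * tau `^ alpha * expR (-1) ^+ n) <= _).
  apply: ler_sum => n _; rewrite mulrCA; apply: ler_wpM2l => //; exact: term_bound.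
rewrite -mulr_sumr -mulr_sumr.
have := @geo_bound (expR (-1)) N (expR_ge0 _) expRN1_le.
have := exprn_ge0 N (expR_ge0 (-1 : R)).
have := powR_ge0 (alpha + 1) alpha; have := powR_ge0 tau alpha.
set S := \sum_(_ < N) _; set A := _ `^ alpha; set B := _ `^ alpha; move=> *.
have : A * B * S <= A * B * 2.
  apply: ler_wpM2l; first exact: mulr_ge0. lra.
move=> h; rewrite [X in _ <= X](_ : _ = Cmt * (A * B * 2)); last by rewrite mulrC; lra.
rewrite (mulrC B A); exact: ler_wpM2l.
Qed.
End Sums.


Section Meas.
Context d (T : measurableType d) (R : realType) (K : nat).

Lemma mforall (p : 'I_K -> T -> bool) :
  (forall j, measurable_fun setT (p j)) ->
  measurable_fun setT (fun x => [forall j, p j x]).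
Proof.
move=> mp.
have -> : (fun x => [forall j, p j x]) = (fun x => all (fun j => p j x) (enum 'I_K)).
  apply/funext => x; apply/idP/idP.
  - by move=> /forallP H; apply/allP => j _; exact: H.
  - by move=> /allP H; apply/forallP => j; apply: H; rewrite mem_enum.
elim: (enum 'I_K) => [|j s IH] /=; first exact: measurable_cst.
exact: measurable_and.
Qed.

Lemma mbigmax (I : Type) (s : seq I) (P : pred I) (F : I -> T -> R) (s0 : T -> R) :
  measurable_fun setT s0 -> (forall i, measurable_fun setT (F i)) ->
  measurable_fun setT (fun x => \big[Num.max/s0 x]_(i <- s | P i) F i x).
Proof.
move=> m0 mF; elim: s => [|i s IH].
  under eq_fun do rewrite big_nil. exact: m0.
under eq_fun do rewrite big_cons.
case: (P i) => //.
exact: measurable_maxr.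
Qed.

Lemma mbigmin (I : Type) (s : seq I) (P : pred I) (F : I -> T -> R) (s0 : T -> R) :
  measurable_fun setT s0 -> (forall i, measurable_fun setT (F i)) ->
  measurable_fun setT (fun x => \big[Num.min/s0 x]_(i <- s | P i) F i x).
Proof.
move=> m0 mF; elim: s => [|i s IH].
  under eq_fun do rewrite big_nil. exact: m0.
under eq_fun do rewrite big_cons.
case: (P i) => //.
exact: measurable_minr.
Qed.

Variable a : 'I_K -> T -> R.
Hypothesis ma : forall j, measurable_fun setT (a j).

Lemma margmax k : measurable_fun setT (fun x => is_argmax (fun j => a j x) k).
Proof. by apply: mforall => j; exact: measurable_fun_ler. Qed.

Lemma mhw k : measurable_fun setT (fun x => hard_winner (fun j => a j x) == Some k).
Proof.
under eq_fun do rewrite hw_spec.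
apply: measurable_and; first exact: margmax.
apply: mforall => j.
have -> : (fun x => is_argmax (fun j => a j x) j ==> (k <= j)%N) =
  (fun x => ~~ is_argmax (fun j => a j x) j || (k <= j)%N).
  by apply/funext => x; rewrite implybE.
apply: measurable_or; last exact: measurable_cst.
exact/measurable_neg/margmax.
Qed.

Lemma mmatch (g : 'I_K -> T -> R) : (forall k, measurable_fun setT (g k)) ->
  measurable_fun setT (fun x => match hard_winner (fun j => a j x) with
                                | Some k => g k x | None => 0 end).
Proof.
move=> mg.
have -> : (fun x => match hard_winner (fun j => a j x) with
                                | Some k => g k x | None => 0 end) =
  (fun x => \sum_k (if hard_winner (fun j => a j x) == Some k then g k x else 0)).
  apply/funext => x; case: (hard_winner _) => [k|]; last by rewrite big1.
  rewrite (bigD1 k) //= eqxx big1 ?addr0 // => j /negbTE nj.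
  by have -> : (Some k == Some j) = false by apply/negbTE; apply: contraFN nj => /eqP [->].
apply: measurable_sum => k.
by apply: measurable_fun_ifT => //; exact: mhw.
Qed.

Lemma mmargin : measurable_fun setT (fun x => top_margin (fun j => a j x)).
Proof.
rewrite /top_margin; apply: mmatch => k.
apply: measurable_funB => //.
apply: mbigmax => //.
exact: mbigmin.
Qed.

Lemma msoftmax tau k : measurable_fun setT (fun x => softmax tau (fun j => a j x) k).
Proof.
have mS : measurable_fun setT (fun x => \sum_j expR (a j x / tau)).
  apply: measurable_sum => j; apply: measurableT_comp => //.
  exact: measurable_funM.
have -> : (fun x => softmax tau (fun j => a j x) k) =
   (fun x => expR (a k x / tau) * expR (- ln (\sum_j expR (a j x / tau)))).
  apply/funext => x; rewrite /softmax expRN lnK // posrE.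
  rewrite (bigD1 k) //= ltr_pwDl ?expR_gt0 // sumr_ge0 // => *; exact: expR_ge0.
apply: measurable_funM; apply: measurableT_comp => //.
- exact: measurable_funM.
- apply: measurableT_comp => //; apply: measurableT_comp => //; exact: measurable_ln.
Qed.

End Meas.


Lemma ereal_final (R : realType) (x y g : \bar R) (c1 M bnd : R) : 0 <= c1 ->
  (0 <= x)%E -> (0 <= y)%E -> (y <= M%:E)%E -> (0 <= g)%E -> (g <= bnd%:E)%E ->
  (x <= y + c1%:E * g)%E -> (y <= x + c1%:E * g)%E -> (`|x - y| <= (c1 * bnd)%:E)%E.
Proof.
move=> c0 x0 y0 yM g0 gb h1 h2.
have gf : g \is a fin_num by rewrite ge0_fin_numE // (le_lt_trans gb) ?ltry.
have yf : y \is a fin_num by rewrite ge0_fin_numE // (le_lt_trans yM) ?ltry.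
have xf : x \is a fin_num.
  rewrite ge0_fin_numE // (le_lt_trans h1) // ltey_eq fin_numD yf /= fin_numM //.
move: x y g xf yf gf x0 y0 yM g0 gb h1 h2 => [rx| |] // [ry| |] // [rg| |] // _ _ _.
move=> x0 y0 _ g0 gb h1 h2.
rewrite -EFinM -EFinD lee_fin in h1; rewrite -EFinM -EFinD lee_fin in h2.
rewrite lee_fin in gb; rewrite lee_fin in g0.
rewrite -EFinB /= lee_fin.
have : c1 * rg <= c1 * bnd by exact: ler_wpM2l.
rewrite ler_norml; lra.
Qed.

Lemma soft_bound (R : realType) (K : nat) tau (Bf : R) (b fv : 'I_K -> R) :
  (forall k, `|fv k| <= Bf) ->
  `|\sum_k softmax tau b k * fv k| <= K%:R * Bf.
Proof.
move=> hf; apply: le_trans (ler_norm_sum _ _ _) _.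
rewrite (_ : K%:R * _ = \sum_(k : 'I_K) Bf); last first.
  by rewrite sumr_const cardE size_enum_ord -[RHS]mulr_natl.
apply: ler_sum => k _; rewrite normrM ger0_norm ?softmax_ge0 //.
rewrite -[X in _ <= X]mul1r; apply: ler_pM => //; first exact: softmax_ge0.
exact: softmax_le1.
Qed.

Local Open Scope classical_set_scope.

Theorem mainTheorem1 (R : realType) (K : nat) (hK : (2 <= K)%N)
  (Cmt alpha BY Bf : R) (hCmt : 0 < Cmt) (halpha : 0 < alpha)
  (hBY : 0 < BY) (hBf : 0 < Bf) :
  exists Csh : R, 0 < Csh /\
  forall (dT : measure_display) (T : measurableType dT) (P : probability T R)
    (dX : measure_display) (Xs : measurableType dX)
    (X : T -> Xs) (Y : T -> R) (Theta Phi : Type)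
    (f : 'I_K -> Theta -> Xs -> R) (a : 'I_K -> Phi -> Xs -> R),
    measurable_fun setT X -> measurable_fun setT Y ->
    (forall k th, measurable_fun setT (f k th)) ->
    (forall k ph, measurable_fun setT (a k ph)) ->
    (* (i) uniform margin tail *)
    (forall (ph : Phi) (t : R), 0 < t ->
       (P [set w | (margin a ph (X w) <= t)%R] <= (Cmt * t `^ alpha)%:E)%E) ->
    (* (ii) uniform boundedness *)
    {ae P, forall w, `|Y w| <= BY} ->
    (forall k th x, `|f k th x| <= Bf) ->
    forall (tau : R), 0 < tau -> tau <= 1 ->
    forall (theta : 'I_K -> Theta) (phi : Phi),
      (`| sq_risk P X Y (soft_pred f a tau theta phi)
          - sq_risk P X Y (hard_pred f a theta phi) | <= (Csh * tau `^ alpha)%:E)%E.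
Proof.
set w := alpha + 1.
have w0 : 0 < w by rewrite /w; lra.
have K1 : (1 : R) <= K%:R by rewrite ler1n; apply: leq_trans hK.
have KBf : 0 < K%:R * Bf by apply: mulr_gt0 => //; lra.
set c2 := 2 * BY + 2 * (K%:R * Bf).
have c2p : 0 < c2 by rewrite /c2; lra.
set c1 := c2 * (K%:R * (2 * Bf)).
have c1p : 0 < c1 by rewrite /c1 mulr_gt0 // mulr_gt0 //; [lra | rewrite mulr_gt0].
exists (c1 * (2 * Cmt * w `^ alpha + 1)).
split.
  rewrite mulr_gt0 //; have := powR_ge0 w alpha.
  have := hCmt; set p := _ `^ _; move=> *.
  have : 0 <= Cmt * p by rewrite mulr_ge0 // ltW.
  lra.
move=> dT T P dX Xs X Y Theta Phi f a mX mY mf ma hmt hY hf tau t0 t1 theta phi.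
set u := tau `^ alpha.
have u0 : 0 < u by apply: powR_gt0.
have [N hN] : exists N : nat, u^-1 < N%:R.
  by exists (Num.Def.archi_bound u^-1); apply: archi_boundP; rewrite invr_ge0 ltW.
set Dl := fun x => margin a phi (X x).
have mD : measurable_fun setT Dl.
  exact: (measurableT_comp (@mmargin _ _ _ _ (fun j => a j phi) (fun j => ma j phi)) mX).
set hs := soft_pred f a tau theta phi.
set hh := hard_pred f a theta phi.
have mhs : measurable_fun setT hs.
  rewrite /hs /soft_pred; apply: measurable_sum => k; apply: measurable_funM.
  - exact: (@msoftmax _ _ _ _ (fun j => a j phi) (fun j => ma j phi)).
  - exact: mf.
have mhh : measurable_fun setT hh.
  exact: (@mmatch _ _ _ _ (fun j => a j phi) (fun j => ma j phi) (fun k => f k (theta k)) (fun k => mf k (theta k))).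
have hsb x : `|hs x| <= K%:R * Bf.
  exact: (@soft_bound R K tau Bf (fun j => a j phi x) (fun k => f k (theta k) x) (fun k => hf k (theta k) x)).
have hhb x : `|hh x| <= K%:R * Bf.
  rewrite /hh /hard_pred; case: hard_winner => [ks|]; last by rewrite normr0 ltW.
  apply: le_trans (hf _ _ _) _; rewrite -[X in X <= _]mul1r; apply: ler_wpM2r => //; exact: ltW.
set S := fun n : nat => [set x | Dl x <= n.+1%:R * w * tau].
have mS n : measurable (S n).
  have -> : S n = Dl @^-1` `]-oo, n.+1%:R * w * tau].
    by apply/seteqP; split => x; rewrite /= in_itv /=.
  by have := mD measurableT _ (measurable_itv `]-oo, n.+1%:R * w * tau]%R); rewrite setTI.
set G := fun x => \sum_(n < N.+1) expR (- (n%:R * w)) * \1_(S n) x + expR (- (N.+1%:R * w)).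
have mG : measurable_fun setT G.
  apply: measurable_funD => //; apply: measurable_sum => n.
  by apply: measurable_funM => //; exact: measurable_indic.
have G0 x : 0 <= G x.
  apply: addr_ge0; last exact: expR_ge0.
  by apply: sumr_ge0 => n _; rewrite mulr_ge0 ?expR_ge0.
have D0 x : 0 <= Dl x.
  rewrite /Dl /margin; case E: (hard_winner (fun j => a j phi (X x))) => [ks|].
  - by have [] := margin_props _ _ _ _ E.
  - by rewrite (margin_none _ _ _ E).
have GE x : expR (- Dl x / tau) <= G x.
  apply: le_trans (@shell_bound _ tau w (Dl x) N t0 w0 (D0 x)) _.
  have -> : G x = \sum_(n < N.+1) expR (- (n%:R * w)) * (Dl x <= n.+1%:R * w * tau)%R%:R + expR (- (N.+1%:R * w)); last by [].
  rewrite /G; congr (_ + _); apply: eq_bigr => n _; congr (_ * _).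
  rewrite indicE; case: (boolP (Dl x <= n.+1%:R * w * tau)) => h.
  - by rewrite mem_set.
  - by rewrite memNset //; apply/negP.
set Af := fun x => (Y x - hs (X x)) ^+ 2.
set Bq := fun x => (Y x - hh (X x)) ^+ 2.
have key x : `|Y x| <= BY -> `|Af x - Bq x| <= c1 * G x.
  move=> hYx.
  have hdiff : `|hs (X x) - hh (X x)| <= K%:R * (2 * Bf) * expR (- Dl x / tau).
    exact: (@soft_hard_diff R K tau Bf (fun j => a j phi (X x)) (fun k => f k (theta k) (X x)) t0 (fun k => hf k (theta k) (X x))).
  have -> : Af x - Bq x = (hh (X x) - hs (X x)) * (2 * Y x - hs (X x) - hh (X x)).
    by rewrite /Af /Bq; ring.
  rewrite normrM.
  have h2 : `|2 * Y x - hs (X x) - hh (X x)| <= c2.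
    move: hYx (hsb (X x)) (hhb (X x)); rewrite /c2 !ler_norml; lra.
  have h3 : `|hh (X x) - hs (X x)| <= K%:R * (2 * Bf) * G x.
    rewrite distrC; apply: le_trans hdiff _; apply: ler_wpM2l; last exact: GE.
    by rewrite mulr_ge0 // ?ler0n // mulr_ge0 // ltW.
  apply: le_trans (ler_pM (normr_ge0 _) (normr_ge0 _) h3 h2) _.
  by rewrite /c1 [c2 * _]mulrC -!mulrA [c2 * _]mulrC.
have step (F1 F2 : T -> R) : measurable_fun setT F1 -> measurable_fun setT F2 ->
    (forall x, 0 <= F1 x) -> (forall x, 0 <= F2 x) ->
    {ae P, forall x, F1 x <= F2 x + c1 * G x} ->
    (\int[P]_x (F1 x)%:E <= \int[P]_x (F2 x)%:E + c1%:E * \int[P]_x (G x)%:E)%E.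
  move=> m1 m2 p1 p2 hae.
  apply: (@le_trans _ _ (\int[P]_x ((F2 x + c1 * G x)%:E))%E).
    apply: ae_ge0_le_integral => //.
    - by move=> x _; rewrite lee_fin.
    - exact/measurable_EFinP.
    - by move=> x _; rewrite lee_fin addr_ge0 // mulr_ge0 // ltW.
    - apply/measurable_EFinP; apply: measurable_funD => //.
      exact: measurable_funM.
    - by apply: filterS hae => x h _; rewrite lee_fin.
  under eq_integral do rewrite EFinD.
  rewrite ge0_integralD //.
  - have intZ : (\int[P]_x (c1 * G x)%:E = c1%:E * \int[P]_x (G x)%:E)%E.
      { rewrite -ge0_integralZl_EFin //.
      all: try (by move=> x _; rewrite lee_fin); try exact/measurable_EFinP; try exact: ltW.
      }
    by rewrite intZ.
  - by move=> x _; rewrite lee_fin.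
  - exact/measurable_EFinP.
  - by move=> x _; rewrite lee_fin mulr_ge0 // ltW.
  - by apply/measurable_EFinP; exact: measurable_funM.
have mAf : measurable_fun setT Af.
  apply: measurable_funX; apply: measurable_funB => //; exact: measurableT_comp mhs mX.
have mBq : measurable_fun setT Bq.
  apply: measurable_funX; apply: measurable_funB => //; exact: measurableT_comp mhh mX.
have hAB := step Af Bq mAf mBq (fun x => sqr_ge0 _) (fun x => sqr_ge0 _).
have hBA := step Bq Af mBq mAf (fun x => sqr_ge0 _) (fun x => sqr_ge0 _).
have ae1 : {ae P, forall x, Af x <= Bq x + c1 * G x}.
  apply: filterS hY => x hx; have := key x hx; set cg := c1 * G x.
  rewrite ler_norml; lra.
have ae2 : {ae P, forall x, Bq x <= Af x + c1 * G x}.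
  apply: filterS hY => x hx; have := key x hx; set cg := c1 * G x.
  rewrite ler_norml; lra.
move: (hAB ae1) (hBA ae2) => {hAB hBA} hAB hBA.
have eG : (\int[P]_x (G x)%:E = \sum_(n < N.+1) (expR (- (n%:R * w)))%:E * P (S n) + (expR (- (N.+1%:R * w)))%:E)%E.
  rewrite /G.
  under eq_integral do rewrite EFinD.
  rewrite ge0_integralD //; last 2 first.
  - move=> x _; rewrite lee_fin; apply: sumr_ge0 => n _.
    by rewrite mulr_ge0 ?expR_ge0 // indicE ler0n.
  - apply/measurable_EFinP; apply: measurable_sum => n; apply: measurable_funM => //.
  have P1 : ((P : {measure set T -> \bar R}) setT = 1)%E by exact: probability_setT.
  congr (_ + _); last by rewrite integral_cst // P1 mule1.
  under eq_integral do rewrite -sumEFin.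
  rewrite ge0_integral_sum //; last first.
    by move=> n; apply/measurable_EFinP; apply: measurable_funM => //; exact: measurable_indic.
  apply: eq_bigr => n _.
  under eq_integral do rewrite EFinM.
  rewrite ge0_integralZl_EFin //; last first.
    by apply/measurable_EFinP; exact: measurable_indic.
  by rewrite integral_indic // setIT.
have gb : (\int[P]_x (G x)%:E <= ((2 * Cmt * w `^ alpha + 1) * u)%:E)%E.
  rewrite eG.
  apply: (@le_trans _ _ ((\sum_(n < N.+1) expR (- (n%:R * w)) * (Cmt * (n.+1%:R * w * tau) `^ alpha) + expR (- (N.+1%:R * w)))%:E)).
    rewrite EFinD -sumEFin; apply: leeD => //.
    apply: lee_sum => n _; rewrite EFinM; apply: lee_wpmul2l.
      by rewrite lee_fin expR_ge0.
    by apply: hmt; rewrite mulr_gt0 // mulr_gt0.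
  rewrite lee_fin mulrDl mul1r; apply: lerD.
    apply: le_trans (@sum_bound R Cmt alpha tau N.+1 halpha t0 (ltW hCmt)) _.
    by [].
  rewrite -[u]invrK expRN lef_pV2 ?posrE ?expR_gt0 ?invr_gt0 //.
  apply: le_trans (ltW hN) _; apply: le_trans (expR_ge1Dx _).
  have : 0 <= N.+1%:R * alpha by rewrite mulr_ge0 // ltW.
  have : N%:R + 1 = N.+1%:R :> R by rewrite -natr1.
  rewrite /w mulrDr mulr1; lra.
have x0 : (0 <= \int[P]_x (Af x)%:E)%E by apply: integral_ge0 => x _; rewrite lee_fin sqr_ge0.
have y0 : (0 <= \int[P]_x (Bq x)%:E)%E by apply: integral_ge0 => x _; rewrite lee_fin sqr_ge0.
have g0 : (0 <= \int[P]_x (G x)%:E)%E by apply: integral_ge0 => x _; rewrite lee_fin.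
set M := (BY + K%:R * Bf) ^+ 2.
have yM : (\int[P]_x (Bq x)%:E <= M%:E)%E.
  apply: (@le_trans _ _ (\int[P]_x (cst M%:E) x)%E).
    apply: ae_ge0_le_integral => //.
    - by move=> x _; rewrite lee_fin sqr_ge0.
    - exact/measurable_EFinP.
    - by move=> x _; rewrite lee_fin sqr_ge0.
    - apply: filterS hY => x hx _; rewrite lee_fin.
      move: hx (hhb (X x)); rewrite /Bq /M !ler_norml => /andP[h1 h2] /andP[h3 h4].
      have : `|Y x - hh (X x)| <= BY + K%:R * Bf.
        rewrite ler_norml; apply/andP; split; lra.
      move=> h; rewrite -real_normK ?num_real //.
      by rewrite lerXn2r // ?nnegrE ?normr_ge0 //; lra.
  have P1 : ((P : {measure set T -> \bar R}) setT = 1)%E by exact: probability_setT.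
  by rewrite integral_cst // P1 mule1.
rewrite -mulrA.
exact: (@ereal_final R _ _ _ c1 M _ (ltW c1p) x0 y0 yM g0 gb hAB hBA).
Qed.
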